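(* In the setting described in the context, let $\hat u_0=\min\{x\in[v,z_0]: f^2(x)=d\}$, for $n\ge1$ let $\hat\mu'_{m,n}=\max\{x\in[v,\hat u_0]: f^{m+2n}(x)=d\}$, and for $n,k\ge1$ let $\hat\mu_{m,n,k}=\min\{x\in[\hat\mu'_{m,n},\hat\mu'_{m,n+1}]: f^{m+2n+2k}(x)=d\}$ (these sets are nonempty). Then for each $n\ge1$ and $k\ge1$, every periodic point of $f$ in $[\hat\mu'_{m,n},\hat\mu_{m,n,k}]$ whose least period is odd has least period $\ge m+2n+2k$.
   Context: Let $I$ be a compact interval and $f:I\to I$ continuous; $f^1=f$, $f^n=f\circ f^{n-1}$. A point $x_0$ is a periodic point of least period $k$ (a period-$k$ point) if $f^k(x_0)=x_0$ and $f^i(x_0)\ne x_0$ for $0<i<k$. Let $m\ge3$ be odd and let $P$ be a periodic orbit of $f$ of least period $m$. Put $e=f^{m-1}(\min P)$. Let $v\in[\min P,e)$ be a point with $f(v)=e$, and let $z\in(v,e)$ be a fixed point of $f$ (such points exist). Define $z_0=\min\{x\in[v,z]: f^2(x)=x\}$ and $d=\max\{x\in[\min P,v]: f^2(x)=z_0\}$ (both sets are nonempty). *)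

(* Defs.v *)
From Stdlib Require Import Reals Lra Lia Arith.
Open Scope R_scope.

Definition iter (n : nat) (f : R -> R) (x : R) : R := Nat.iter n f x.

Definition cont_on (a b : R) (f : R -> R) : Prop :=
  forall x, a <= x <= b -> forall eps, 0 < eps ->
    exists delta, 0 < delta /\
      forall y, a <= y <= b -> Rabs (y - x) < delta -> Rabs (f y - f x) < eps.

Definition maps_into (a b : R) (f : R -> R) : Prop :=
  forall x, a <= x <= b -> a <= f x <= b.

Definition least_period (f : R -> R) (k : nat) (x : R) : Prop :=
  (0 < k)%nat /\ iter k f x = x /\ forall i, (0 < i < k)%nat -> iter i f x <> x.

Definition is_min_of (S : R -> Prop) (x : R) : Prop :=
  S x /\ forall y, S y -> x <= y.

Definition is_max_of (S : R -> Prop) (x : R) : Prop :=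
  S x /\ forall y, S y -> y <= x.

(* Main.v *)
Require Import Defs.
From Stdlib Require Import Reals Lra Lia Arith Ranalysis5.
Open Scope R_scope.

Definition clamp (x1 x2 x : R) := Rmax x1 (Rmin x2 x).

Lemma clamp_in x1 x2 x : x1 <= x2 -> x1 <= clamp x1 x2 x <= x2.
Proof. intros. unfold clamp, Rmax, Rmin. repeat destruct Rle_dec; lra. Qed.

Lemma clamp_id x1 x2 x : x1 <= x <= x2 -> clamp x1 x2 x = x.
Proof. intros. unfold clamp, Rmax, Rmin. repeat destruct Rle_dec; lra. Qed.

Lemma clamp_lip x1 x2 x y : x1 <= x2 -> Rabs (clamp x1 x2 y - clamp x1 x2 x) <= Rabs (y - x).
Proof. intros. unfold clamp, Rmax, Rmin. repeat destruct Rle_dec; split_Rabs; lra. Qed.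

Lemma ivt (h : R -> R) a b x1 x2 c :
  a <= x1 -> x1 <= x2 -> x2 <= b -> cont_on a b h ->
  (h x1 <= c <= h x2 \/ h x2 <= c <= h x1) ->
  exists t, x1 <= t <= x2 /\ h t = c.
Proof.
  intros H1 H2 H3 Hc Hv.
  set (H := fun x => h (clamp x1 x2 x) - c).
  assert (HC : continuity H).
  { intros x0. unfold continuity_pt, continue_in, limit1_in, limit_in; simpl; unfold R_dist.
    intros eps Heps.
    pose proof (clamp_in x1 x2 x0 H2) as Hx0.
    destruct (Hc (clamp x1 x2 x0) ltac:(lra) eps Heps) as [del [Hdel Hd]].
    exists del; split; [lra|]. intros x [_ Hx].
    pose proof (clamp_in x1 x2 x H2) as Hx'.
    pose proof (clamp_lip x1 x2 x0 x H2).
    unfold H. replace (h (clamp x1 x2 x) - c - (h (clamp x1 x2 x0) - c))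
      with (h (clamp x1 x2 x) - h (clamp x1 x2 x0)) by ring.
    apply Hd; [lra|lra]. }
  destruct (IVT_cor H x1 x2 HC H2) as [t [Ht Ht0]].
  { unfold H. rewrite !clamp_id by lra.
    destruct Hv; nra. }
  exists t; split; auto. unfold H in Ht0. rewrite clamp_id in Ht0 by lra. lra.
Qed.

Lemma iter_S n f x : iter (S n) f x = f (iter n f x).
Proof. reflexivity. Qed.

Lemma iter_add n k f x : iter (n + k) f x = iter n f (iter k f x).
Proof. unfold iter. apply Nat.iter_add. Qed.

Lemma maps_iter a b f n : maps_into a b f -> maps_into a b (iter n f).
Proof. intros Hm. induction n; intros x Hx; simpl. lra. apply Hm, IHn, Hx. Qed.

Lemma cont_iter a b f n : cont_on a b f -> maps_into a b f -> cont_on a b (iter n f).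
Proof.
  intros Hc Hm. induction n.
  - intros x Hx eps He. exists eps; split; [exact He|]. intros y Hy Hxy. unfold iter; simpl. exact Hxy.
  - intros x Hx eps He.
    pose proof (maps_iter a b f n Hm x Hx) as Hix.
    destruct (Hc _ Hix eps He) as [d1 [Hd1 H1]].
    destruct (IHn x Hx d1 Hd1) as [d2 [Hd2 H2]].
    exists d2; split; auto. intros y Hy Hxy. rewrite !iter_S.
    apply H1. apply maps_iter; auto. apply H2; auto.
Qed.

Lemma cont_sub_id a b h : cont_on a b h -> cont_on a b (fun x => h x - x).
Proof.
  intros Hc x Hx eps He.
  destruct (Hc x Hx (eps/2) ltac:(lra)) as [d1 [Hd1 H1]].
  exists (Rmin d1 (eps/2)); split. apply Rmin_pos; lra.
  intros y Hy Hxy. pose proof (Rmin_l d1 (eps/2)). pose proof (Rmin_r d1 (eps/2)).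
  specialize (H1 y Hy ltac:(lra)).
  replace (h y - y - (h x - x)) with ((h y - h x) - (y - x)) by ring.
  revert H1; split_Rabs; lra.
Qed.

Lemma iter_mult q f y k : iter q f y = y -> iter (k * q) f y = y.
Proof. intros H. induction k. reflexivity. change (S k * q)%nat with (q + k * q)%nat. rewrite iter_add, IHk. exact H. Qed.
Ltac side := first [assumption | (apply cont_iter; auto; fail) | (apply cont_sub_id; auto; fail) | (cbv beta in *; first [lra | left; lra | right; lra])].
Lemma iter2 f x : iter 2 f x = f (f x).
Proof. reflexivity. Qed.
Lemma iter1 f x : iter 1 f x = f x.
Proof. reflexivity. Qed.

Theorem lemma14
  (a b : R) (f : R -> R) (m : nat) (pm v z z0 d u0 : R)
  (mu' : nat -> R) (mu : nat -> nat -> R) :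
  a <= b ->
  cont_on a b f ->
  maps_into a b f ->
  Nat.Odd m -> (3 <= m)%nat ->
  (* P = orbit of pm, pm = min P, P of least period m in [a,b] *)
  a <= pm <= b ->
  least_period f m pm ->
  (forall i : nat, (i < m)%nat -> pm <= iter i f pm) ->
  (* e = f^(m-1)(min P) *)
  pm <= v < iter (m - 1) f pm ->
  f v = iter (m - 1) f pm ->
  v < z < iter (m - 1) f pm ->
  f z = z ->
  is_min_of (fun x => v <= x <= z /\ iter 2 f x = x) z0 ->
  is_max_of (fun x => pm <= x <= v /\ iter 2 f x = z0) d ->
  is_min_of (fun x => v <= x <= z0 /\ iter 2 f x = d) u0 ->
  (forall n : nat, (1 <= n)%nat ->
     is_max_of (fun x => v <= x <= u0 /\ iter (m + 2 * n) f x = d) (mu' n)) ->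
  (forall n k : nat, (1 <= n)%nat -> (1 <= k)%nat ->
     is_min_of (fun x => mu' n <= x <= mu' (S n) /\
                         iter (m + 2 * n + 2 * k) f x = d) (mu n k)) ->
  forall n k : nat, (1 <= n)%nat -> (1 <= k)%nat ->
  forall (y : R) (q : nat),
    mu' n <= y <= mu n k ->
    least_period f q y -> Nat.Odd q ->
    (m + 2 * n + 2 * k <= q)%nat.
Proof.
  intros Hab Hc Hm Hodd Hm3 Hpm Hper Hmin Hv Hfv Hz Hfz Hz0 Hd Hu0 Hmu' Hmu n k Hn Hk y q Hy Hq Hqodd.
  set (e := iter (m - 1) f pm) in *.
  pose proof (cont_iter a b f 2 Hc Hm) as Cg.
  destruct Hper as [Hm0 [Hpmm Hpmi]].
  assert (Hfe : f e = pm).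
  { unfold e. rewrite <- iter_S. replace (S (m-1)) with m by lia. exact Hpmm. }
  assert (He : a <= e <= b) by (apply maps_iter; auto).
  assert (Hpv : pm < v).
  { destruct (Req_dec pm v) as [E|E]; [|lra]. exfalso.
    apply (Hpmi (m-2)%nat ltac:(lia)).
    transitivity (iter (m - 2) f (iter m f pm)); [rewrite Hpmm; reflexivity|].
    rewrite <- iter_add.
    replace (m - 2 + m)%nat with ((m-1) + (m-1))%nat by lia.
    rewrite iter_add. fold e. rewrite <- Hfv, <- E.
    rewrite <- (iter1 f pm), <- iter_add. replace (m-1+1)%nat with m by lia. exact Hpmm. }
  assert (Hgv : iter 2 f v = pm) by (rewrite iter2, Hfv; exact Hfe).
  destruct Hz0 as [[Hz0r Hgz0] Hz0min].
  assert (Hvz0 : v < z0).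
  { destruct (Req_dec v z0) as [E|E]; [|lra]. rewrite <- E in Hgz0. lra. }
  assert (F3 : forall x, v <= x < z0 -> iter 2 f x < x).
  { intros x Hx. destruct (Rlt_le_dec (iter 2 f x) x) as [L|L]; auto. exfalso.
    destruct (ivt (fun t => iter 2 f t - t) a b v x 0) as [t [Ht Ht0]]; try side.
    all: try (apply cont_sub_id; auto; fail).
    assert (z0 <= t) by (apply Hz0min; split; lra). lra. }
  assert (W : z0 <= f z0).
  { destruct (Rle_lt_dec z0 (f z0)) as [L|L]; auto. exfalso.
    destruct (ivt (fun t => f t - t) a b v z0 0) as [t [Ht Ht0]]; try side.
    all: try (apply cont_sub_id; auto; fail).
    assert (Eft : f t = t) by lra.
    assert (z0 <= t) by (apply Hz0min; split; [lra| rewrite iter2, !Eft; auto]).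
    assert (t = z0) by lra. subst t. lra. }
  assert (Hff : f (f z0) = z0) by (rewrite <- iter2; exact Hgz0).
  assert (Horb : forall r, iter r f z0 = z0 \/ iter r f z0 = f z0).
  { induction r. left; reflexivity. rewrite iter_S. destruct IHr as [E|E]; rewrite E; auto. }
  assert (Horb' : forall r, z0 <= iter r f z0).
  { intro r. destruct (Horb r) as [E|E]; rewrite E; lra. }
  assert (Heven : forall j, iter (2*j) f z0 = z0).
  { induction j. reflexivity. replace (2 * S j)%nat with (2*j + 2)%nat by lia.
    rewrite iter_add, Hgz0. exact IHj. }
  assert (F4 : forall x, v <= x < z0 -> f x <> z0).
  { intros x Hx E. pose proof (F3 x Hx). rewrite iter2, E in H. lra. }
  destruct Hd as [[Hdr Hgd] Hdmax].
  assert (F5 : forall x, d < x <= v -> iter 2 f x < z0).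
  { intros x Hx. destruct (Rlt_le_dec (iter 2 f x) z0) as [L|L]; auto. exfalso.
    destruct (ivt (iter 2 f) a b x v z0) as [t [Ht Ht0]]; try side.
    assert (t <= d) by (apply Hdmax; split; [lra|auto]). lra. }
  assert (F6 : f d <= d \/ z0 <= f d).
  { assert (Hfs : f (f d) = z0) by (rewrite <- iter2; exact Hgd).
    destruct (Rle_lt_dec (f d) d) as [L|L]; auto.
    destruct (Rle_lt_dec z0 (f d)) as [L2|L2]; auto. exfalso.
    destruct (Rle_lt_dec (f d) v) as [L3|L3].
    - pose proof (F5 (f d) ltac:(lra)). rewrite iter2, Hfs in H. lra.
    - apply (F4 (f d)); [lra|exact Hfs]. }
  destruct Hu0 as [[Hu0r Hgu0] Hu0min].
  assert (Hu0z0 : u0 < z0).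
  { destruct (Req_dec u0 z0) as [E|E]; [|lra]. rewrite E in Hgu0. lra. }
  assert (F7 : forall j, exists t, u0 <= t <= z0 /\ iter (2 * S j) f t = d).
  { induction j. exists u0; split; [lra|exact Hgu0].
    destruct IHj as [t [Ht Ht0]].
    destruct (ivt (iter 2 f) a b u0 z0 t) as [s [Hs Hs0]]; try side.
    exists s; split; auto. replace (2 * S (S j))%nat with (2 * S j + 2)%nat by lia.
    rewrite iter_add, Hs0; exact Ht0. }
  assert (F8 : forall j, exists t, d <= t <= v /\ iter (2 * S j) f t = d).
  { induction j.
    - destruct (ivt (iter 2 f) a b d v d) as [s [Hs Hs0]]; try side.
      exists s; split; auto.
    - destruct IHj as [t [Ht Ht0]].
      destruct (ivt (iter 2 f) a b d v t) as [s [Hs Hs0]]; try side.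
      exists s; split; auto. replace (2 * S (S j))%nat with (2 * S j + 2)%nat by lia.
      rewrite iter_add, Hs0; exact Ht0. }
  destruct Hq as [Hq0 [Hqy _]].
  assert (LZ : forall x M, v <= x <= u0 -> iter q f x = x -> iter M f x = d -> False).
  { intros x M Hx Hxq HM.
    assert (E1 : iter (M + 2) f x = z0) by (rewrite Nat.add_comm, iter_add, HM; exact Hgd).
    pose proof (iter_mult q f x (M+2) Hxq) as E2.
    replace ((M + 2) * q)%nat with (((M+2)*q - (M+2)) + (M+2))%nat in E2 by nia.
    rewrite iter_add, E1 in E2. pose proof (Horb' ((M + 2) * q - (M + 2))%nat). lra. }
  destruct (Hmu' n Hn) as [[Hr1 Hv1] Hmax1].
  destruct (Hmu' (S n) ltac:(lia)) as [[Hr2 Hv2] Hmax2].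
  destruct (Hmu n k Hn Hk) as [[Hr3 Hv3] Hmin3].
  assert (Hyr : v <= y <= u0) by lra.
  destruct Hodd as [pm' Hm'], Hqodd as [pq Hq'].
  destruct (le_lt_dec (m + 2 * n + 2 * k) q) as [G|G]; auto. exfalso.
  destruct (le_lt_dec (m + 2 * n) q) as [G2|G2].
  - set (i := (pq - pm' - n)%nat).
    assert (Hqi : q = (m + 2 * n + 2 * i)%nat) by (unfold i; lia).
    assert (Hmu'q : iter q f (mu' n) = iter (2 * i) f d)
      by (rewrite Hqi, Nat.add_comm, iter_add, Hv1; reflexivity).
    assert (key : forall t, (iter q f (mu' n) <= t <= y \/ y <= t <= iter q f (mu' n)) ->
                  iter (2 * (k - i)) f t = d -> False).
    { intros t Ht Ht0.
      destruct (ivt (iter q f) a b (mu' n) y t) as [x [Hx Hx0]]; try side.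
      all: try (rewrite Hqy; side). all: try (apply cont_iter; auto; fail).
      assert (iter (m + 2 * n + 2 * k) f x = d).
      { replace (m + 2 * n + 2 * k)%nat with (2 * (k - i) + q)%nat by lia.
        rewrite iter_add, Hx0; exact Ht0. }
      assert (mu n k <= x) by (apply Hmin3; split; [lra|auto]).
      assert (x = y) by lra. subst x.
      apply (LZ y _ Hyr Hqy H). }
    destruct i as [|i'] eqn:Ei.
    + destruct (F8 (k-1)%nat) as [t [Ht Ht0]].
      apply (key t). left. rewrite Hmu'q. simpl. lra.
      replace (2 * (k - 0))%nat with (2 * S (k - 1))%nat by lia. exact Ht0.
    + destruct (F7 (k - S i' - 1)%nat) as [t [Ht Ht0]].
      assert (Hzz : iter (2 * S i') f d = z0).
      { replace (2 * S i')%nat with (2 * i' + 2)%nat by lia. rewrite iter_add, Hgd. apply Heven. }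
      apply (key t). right. rewrite Hmu'q, Hzz. lra.
      replace (2 * (k - S i'))%nat with (2 * S (k - S i' - 1))%nat by lia. exact Ht0.
  - destruct (Nat.eq_dec q 1) as [Q1|Q1].
    + rewrite Q1 in Hqy. unfold iter in Hqy; simpl in Hqy.
      assert (z0 <= y) by (apply Hz0min; split; [lra| rewrite iter2, !Hqy; auto]). lra.
    + set (j := (pm' + n - pq - 1)%nat).
      assert (Hqj : (m + 2 * n = 2 * S j + q)%nat) by (unfold j; lia).
      assert (Hc0 : iter q f u0 = iter (q - 2) f d).
      { replace q with ((q - 2) + 2)%nat at 1 by lia. rewrite iter_add, Hgu0. reflexivity. }
      assert (key : forall t, (iter q f u0 <= t <= y \/ y <= t <= iter q f u0) ->
                  iter (2 * S j) f t = d -> False).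
      { intros t Ht Ht0.
        destruct (ivt (iter q f) a b y u0 t) as [x [Hx Hx0]]; try side.
        all: try (rewrite Hqy; side). all: try (apply cont_iter; auto; fail).
        assert (iter (m + 2 * n) f x = d) by (rewrite Hqj, iter_add, Hx0; exact Ht0).
        assert (x <= mu' n) by (apply Hmax1; split; [lra|auto]).
        assert (x = y) by lra. subst x.
        apply (LZ y _ Hyr Hqy H). }
      assert (Hcc : iter q f u0 <= d \/ z0 <= iter q f u0).
      { rewrite Hc0. destruct (Nat.eq_dec q 3) as [Q3|Q3].
        - replace (q - 2)%nat with 1%nat by lia. exact F6.
        - right. replace (q - 2)%nat with (1 + 2 * S (pq - 2))%nat by lia.
          rewrite iter_add, iter1. replace (2 * S (pq - 2))%nat with (2 * (pq-2) + 2)%nat by lia.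
          rewrite iter_add, Hgd, Heven. exact W. }
      destruct Hcc as [Hcc|Hcc].
      * destruct (F8 j) as [t [Ht Ht0]]. apply (key t); [left; lra|exact Ht0].
      * destruct (F7 j) as [t [Ht Ht0]]. apply (key t); [right; lra|exact Ht0].
Qed.
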